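(* There exist clustering instances with $N\subseteq C$ and $k\le n$ and outcomes $W$ in them that satisfy UPRF but do not satisfy rank-JR.
   Context: Let $(\mathcal X,d)$ be a metric space, $N=[n]$ a set of agents and $C$ a set of candidates located in $\mathcal X$, $k\in\mathbb N^+$; an outcome is $W\subseteq C$ with $|W|\le k$; $B(i,r)=\{x\in\mathcal X:d(i,x)\le r\}$. UPRF: $W$ satisfies UPRF if there are no $\ell\in\mathbb N$, no $N'\subseteq N$ with $|N'|\ge \ell n/k$, and no $y\in\mathbb R$ with $\max_{i,i'\in N'}d(i,i')\le y$ and $|\bigcup_{i\in N'}B(i,y)\cap W|<\ell$. Rank-JR: $W$ satisfies rank-JR if for every $y\in\mathbb R$ and every $N'\subseteq N$ with $|N'|\ge n/k$ and $|\bigcap_{i\in N'}B(i,y)\cap C|\ge1$ there is $i\in N'$ with $|B(i,y)\cap W|\ge1$. *)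

(* Defs.v *)
From Stdlib Require Import Reals.
From HB Require Import structures.
From mathcomp Require Import all_boot all_order all_algebra.
From mathcomp Require Import Rstruct.
Set Implicit Arguments. Unset Strict Implicit. Unset Printing Implicit Defensive.
Import Order.TTheory GRing.Theory Num.Theory.
Local Open Scope ring_scope.

Definition is_metric (X : Type) (d : X -> X -> R) : Prop :=
  (forall x y, 0 <= d x y) /\
  (forall x y, d x y = 0 <-> x = y) /\
  (forall x y, d x y = d y x) /\
  (forall x y z, d x z <= d x y + d y z).

(* Agents N = [n] = 'I_n located by [agent]; candidates C = the finite type Cand
   located by [cand]; outcome W : {set Cand}. *)

Definition union_ball_W (X : Type) (d : X -> X -> R) (n : nat) (Cand : finType)
  (agent : 'I_n -> X) (cand : Cand -> X) (N' : {set 'I_n}) (y : R) (W : {set Cand}) : nat :=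
  #|[set c in W | [exists i in N', d (agent i) (cand c) <= y]]|.

Definition UPRF (X : Type) (d : X -> X -> R) (n : nat) (Cand : finType)
  (agent : 'I_n -> X) (cand : Cand -> X) (k : nat) (W : {set Cand}) : Prop :=
  ~ exists (l : nat) (N' : {set 'I_n}) (y : R),
      ((l%:R * n%:R / k%:R : R) <= #|N'|%:R) /\
      (forall i i', i \in N' -> i' \in N' -> d (agent i) (agent i') <= y) /\
      (union_ball_W d agent cand N' y W < l)%N.

Definition rankJR (X : Type) (d : X -> X -> R) (n : nat) (Cand : finType)
  (agent : 'I_n -> X) (cand : Cand -> X) (k : nat) (W : {set Cand}) : Prop :=
  forall (y : R) (N' : {set 'I_n}),
    (n%:R / k%:R : R) <= #|N'|%:R ->
    (exists c : Cand, forall i, i \in N' -> d (agent i) (cand c) <= y) ->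
    exists2 i, i \in N' & [set c in W | d (agent i) (cand c) <= y] != set0.

(* Main.v *)
Require Import Defs.
From Stdlib Require Import Reals.
From HB Require Import structures.
From mathcomp Require Import all_boot all_order all_algebra.
From mathcomp Require Import Rstruct.
From mathcomp Require Import lra zify.
Import Order.TTheory GRing.Theory Num.Theory.
Local Open Scope ring_scope.

Definition dd (x y : R) : R := `|x - y|.
Definition ag (i : 'I_2) : R := (4 * (i : nat))%:R.
Definition cd (c : 'I_9) : R := (c : nat)%:R.
Lemma dist_natG (T : numDomainType) (a b : nat) : (a <= b)%N -> `|a%:R - b%:R : T| = (b - a)%:R.
Proof. by move=> h; rewrite distrC -natrB // normr_nat. Qed.
Lemma dist_natG' (T : numDomainType) (a b : nat) : (b <= a)%N -> `|a%:R - b%:R : T| = (a - b)%:R.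
Proof. by move=> h; rewrite -natrB // normr_nat. Qed.
Lemma dist_nat (a b : nat) : (a <= b)%N -> `|a%:R - b%:R : R| = (b - a)%:R.
Proof. exact: dist_natG. Qed.
Lemma dist_nat' (a b : nat) : (b <= a)%N -> `|a%:R - b%:R : R| = (a - b)%:R.
Proof. exact: dist_natG'. Qed.

Definition WW : {set 'I_9} := [set inord 7].

Lemma dd_metric : is_metric dd.
Proof.
rewrite /is_metric /dd; split; first by move=> x y; exact: normr_ge0.
split; first by move=> x y; split; [move/eqP; rewrite normr_eq0 subr_eq0 => /eqP|move=>->; rewrite subrr normr0].
split; first by move=> x y; exact: distrC.
move=> x y z; exact: ler_distD.
Qed.

Theorem mainTheorem5 :
  exists (X : Type) (d : X -> X -> R) (n k : nat) (Cand : finType)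
         (agent : 'I_n -> X) (cand : Cand -> X) (W : {set Cand}),
    is_metric d /\ (0 < k)%N /\ (k <= n)%N /\
    (forall i : 'I_n, exists c : Cand, cand c = agent i) /\
    (#|W| <= k)%N /\
    UPRF d agent cand k W /\ ~ rankJR d agent cand k W.
Proof.
exists R, dd, 2%N, 1%N, ('I_9 : finType), ag, cd, WW.
split; first exact: dd_metric.
split; first by [].
split; first by [].
split.
  move=> i; exists (inord (4 * i)); rewrite /cd /ag inordK //.
  by case: i => [[|[|]]].
split; first by rewrite /WW cards1.
split.
  move=> [l [N' [y [H1 [H2 H3]]]]].
  case: l H1 H3 => [|l] H1 H3; first by [].
  move: H1; rewrite RdivE RmultE mulr1n divr1 -natrM ler_nat => H1.
  have Hc : (#|N'| <= 2)%N by have := max_card N'; rewrite card_ord.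
  have Hl : l = 0%N by lia.
  subst l.
  have HN : N' = setT.
    by apply/eqP; rewrite eqEcard subsetT cardsT card_ord; lia.
  subst N'.
  have Hy := H2 (ord0 : 'I_2) (inord 1) (in_setT _) (in_setT _).
  rewrite /dd /ag inordK // dist_nat // in Hy.
  move: H3; rewrite ltnS leqn0 cards_eq0 => /eqP /setP /(_ (inord 7)).
  rewrite !inE eqxx /= => /negbT /negP; apply.
  apply/existsP; exists (inord 1); rewrite in_setT /= /dd /ag /cd !inordK //.
  rewrite dist_nat //; apply: le_trans Hy; by rewrite ler_nat.
move=> H.
have [||i _] := H 2%:R setT.
- by rewrite RdivE mulr1n divr1 cardsT card_ord.
- exists (inord 2) => i _; rewrite /dd /ag /cd inordK //.
  case: i => [[|[|m]]] Hi; last by exfalso; have := Hi; rewrite !ltnS ltn0.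
    by rewrite dist_nat // ler_nat.
  by rewrite dist_nat' // ler_nat.
apply/negP; rewrite negbK; apply/eqP/setP => c; rewrite !inE.
apply/negbTE; apply/negP => /andP [/eqP -> ].
rewrite /dd /ag /cd inordK //.
case: i => [[|[|m]]] Hi; last by exfalso; have := Hi; rewrite !ltnS ltn0.
  by rewrite dist_nat // ler_nat.
by rewrite dist_nat // ler_nat.
Qed.
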